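(* Let $q=2^f$ with $f\ge4$, let $q_0<q$ be a power of $2$ with $\gcd(q-1,q_0^2-1)=1$, and let $u\in\mathscr{U}_{q,q_0}$. Let $\eta$ be a primitive element of $\mathbb{F}_q$ with $u=(1+\eta^{q_0})/(\eta+\eta^{q_0})$, and let $k$ be an integer with $1+\eta=\eta^{k+1}$. Then the subgraph of $\Gamma_u$ induced on the neighborhood $\Omega_u\cup\Omega_{u+1}$ of the identity vertex is isomorphic to the generalized Petersen graph $GPG(q-1,k)$.
   Context: For $a,c\in\mathbb{F}_q$ let $\Phi_{a,c}=\begin{bmatrix}1&0&0\\ a&1&0\\ c&a^{q_0}&1\end{bmatrix}$, $K=\{\Phi_{a,c}: a,c\in\mathbb{F}_q\}\le GL(3,\mathbb{F}_q)$, and for $v\in\mathbb{F}_q$ let $\Omega_v=\{\Phi_{a,va^{q_0+1}}: a\in\mathbb{F}_q^*\}$. $\Gamma_u=\mathrm{Cay}(K,\Omega_u\cup\Omega_{u+1})$ is the graph with vertex set $K$, $x,y$ adjacent iff $xy^{-1}\in\Omega_u\cup\Omega_{u+1}$. $\mathscr{U}_{q,q_0}$ is the set of $u\in\mathbb{F}_q$ such that (U1) $u=(1+\eta^{q_0})/(\eta+\eta^{q_0})$ for some primitive element $\eta$ of $\mathbb{F}_q$, and (U2) $X^{q_0+1}+uX^{q_0}+(u+1)X+1$ has no roots in $\mathbb{F}_q$. For an integer $n\ge3$ and an integer $k$, $GPG(n,k)$ is the graph with vertices $c_1,\dots,c_n,c_1',\dots,c_n'$ and edges $c_ic_{i+1}$,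 $c_ic_i'$, $c_i'c_{i+k}'$ ($i=1,\dots,n$, subscripts modulo $n$). *)

(* Defs.v *)
From HB Require Import structures.
From mathcomp Require Import all_boot all_order all_algebra all_field.
Set Implicit Arguments. Unset Strict Implicit. Unset Printing Implicit Defensive.
Import Order.TTheory GRing.Theory Num.Theory.
Local Open Scope ring_scope.

Section Defs.
Variable F : finFieldType.

Definition Phi (q0 : nat) (a c : F) : 'M[F]_3 :=
  \matrix_(i < 3, j < 3)
    if i == j then 1
    else if ((i : nat) == 1%N) && ((j : nat) == 0%N) then a
    else if ((i : nat) == 2%N) && ((j : nat) == 0%N) then c
    else if ((i : nat) == 2%N) && ((j : nat) == 1%N) then a ^+ q0
    else 0.

Definition Kgrp (q0 : nat) : {set 'M[F]_3} :=
  [set Phi q0 a c | a in F, c in F].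

Definition Omega (q0 : nat) (v : F) : {set 'M[F]_3} :=
  [set Phi q0 a (v * a ^+ (q0 + 1)) | a in [set a : F | a != 0]].

Definition Conn (q0 : nat) (u : F) : {set 'M[F]_3} :=
  Omega q0 u :|: Omega q0 (u + 1).

Definition cay_adj (q0 : nat) (u : F) (x y : 'M[F]_3) : bool :=
  (x *m invmx y) \in Conn q0 u.

Definition Uset (q0 : nat) : {set F} :=
  [set u : F |
    [exists eta : F, ((#|F|.-1).-primitive_root eta)
                     && (u == (1 + eta ^+ q0) / (eta + eta ^+ q0))]
    && ~~ [exists x : F,
             root ('X^(q0.+1) + u%:P * 'X^q0 + (u + 1)%:P * 'X + 1) x]].

End Defs.

(* Generalized Petersen graph GPG(n,k): vertex (false, i) = c_i, (true, i) = c_i'. *)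
Definition gpg_edge (n : nat) (k : int) (x y : bool * 'I_n) : bool :=
  match x, y with
  | (false, i), (false, j) => (j%:Z == i%:Z + 1 %[mod n%:Z])%Z
  | (false, i), (true, j) => i == j
  | (true, i), (true, j) => (j%:Z == i%:Z + k %[mod n%:Z])%Z
  | _, _ => false
  end.

Arguments gpg_edge : clear implicits.

Definition gpg_adj (n : nat) (k : int) : rel (bool * 'I_n) :=
  fun x y => gpg_edge n k x y || gpg_edge n k y x.

Definition induced (T : finType) (e : rel T) (S : {set T}) : rel {x : T | x \in S} :=
  fun x y => e (val x) (val y).

Definition graph_iso (V W : finType) (eV : rel V) (eW : rel W) : Prop :=
  exists f : V -> W, bijective f /\ forall x y, eW (f x) (f y) = eV x y.

Arguments gpg_adj : clear implicits.
Arguments induced {T} e S.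

(* Main.v *)
Require Import Defs.
From HB Require Import structures.
From mathcomp Require Import all_boot all_order all_algebra all_field.
From mathcomp Require Import ring.
Import Order.TTheory GRing.Theory Num.Theory.
Local Open Scope ring_scope.
Set Implicit Arguments. Unset Strict Implicit.

Section S.
Variable F : finFieldType.
Variable q0 : nat.
Hypothesis h2 : (2:F) = 0.
Hypothesis frob : forall x y : F, (x + y)^+q0 = x^+q0 + y^+q0.
Hypothesis q0pos : (0 < q0)%N.

Lemma ch2 : 2 \in [pchar F].
Proof. by rewrite inE /= h2 eqxx. Qed.

Lemma natr2 n : (n%:R : F) = (odd n)%:R.
Proof.
elim: n => // n IH; rewrite -addn1 natrD IH oddD /=.
case: (odd n) => /=; last by rewrite add0r.
exact: h2.
Qed.
Lemma c3 : (3:F) = 1. Proof. exact: natr2 3. Qed.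
Lemma c4 : (4:F) = 0. Proof. exact: natr2 4. Qed.
Lemma c5 : (5:F) = 1. Proof. exact: natr2 5. Qed.
Lemma c6 : (6:F) = 0. Proof. exact: natr2 6. Qed.
Lemma c7 : (7:F) = 1. Proof. exact: natr2 7. Qed.
Lemma c8 : (8:F) = 0. Proof. exact: natr2 8. Qed.
Lemma cm1 : (-1:F) = 1. Proof. by rewrite (oppr_pchar2 ch2). Qed.
Lemma cm2 : (-2:F) = 0. Proof. by rewrite h2 oppr0. Qed.
Lemma cm3 : (-3:F) = 1. Proof. by rewrite c3 cm1. Qed.
Lemma cm4 : (-4:F) = 0. Proof. by rewrite c4 oppr0. Qed.
Lemma cm5 : (-5:F) = 1. Proof. by rewrite c5 cm1. Qed.
Lemma cm6 : (-6:F) = 0. Proof. by rewrite c6 oppr0. Qed.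
Lemma cm7 : (-7:F) = 1. Proof. by rewrite c7 cm1. Qed.
Lemma cm8 : (-8:F) = 0. Proof. by rewrite c8 oppr0. Qed.
Ltac r2 := ring: h2 c3 c4 c5 c6 c7 c8 cm2 cm4 cm6 cm8.


Lemma Phi_mul (a b c d : F) : Phi q0 a c *m Phi q0 b d = Phi q0 (a + b) (c + d + a^+q0 * b).
Proof.
apply/matrixP => i j; rewrite !mxE !big_ord_recl big_ord0 !mxE /=.
case: i => [[|[|[|i]]] Hi] //=; case: j => [[|[|[|j]]] Hj] //=; rewrite ?frob; ring.
Qed.

Lemma Phi00 : Phi q0 (0:F) 0 = 1%:M.
Proof.
apply/matrixP => i j; rewrite !mxE expr0n (negbTE (lt0n_neq0 q0pos)) /=.
by case: i => [[|[|[|i]]] Hi] //=; case: j => [[|[|[|j]]] Hj].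
Qed.

Lemma Phi_inv (b d : F) : invmx (Phi q0 b d) = Phi q0 b (d + b^+q0 * b).
Proof.
have H : Phi q0 b d *m Phi q0 b (d + b^+q0 * b) = 1%:M.
  rewrite Phi_mul -Phi00; congr Phi; r2.
have [U1 U2] := mulmx1_unit H.
by rewrite -[RHS]mul1mx -(mulVmx U1) -mulmxA H mulmx1.
Qed.

Lemma Phi_inj (a b c d : F) : Phi q0 a c = Phi q0 b d -> a = b /\ c = d.
Proof.
move=> E; split.
  by have := congr1 (fun M : 'M_3 => M (@Ordinal 3 1 isT) (@Ordinal 3 0 isT)) E; rewrite !mxE.
by have := congr1 (fun M : 'M_3 => M (@Ordinal 3 2 isT) (@Ordinal 3 0 isT)) E; rewrite !mxE.
Qed.


Variable u : F.

Lemma PhiConn x y : (Phi q0 x y \in Conn q0 u) =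
  (x != 0) && ((y == u * x^+(q0+1)) || (y == (u+1)*x^+(q0+1))).
Proof.
rewrite /Conn /Omega !inE; apply/idP/idP.
  case/orP => /imsetP [a]; rewrite inE => a0 /Phi_inj [-> ->]; by rewrite a0 eqxx ?orbT.
case/andP => x0 /orP [] /eqP ->; apply/orP; [left|right]; apply/imsetP; exists x; by rewrite ?inE.
Qed.


Lemma eq_char2 (x y : F) : (x == y) = (x + y == 0).
Proof. by rewrite addr_eq0 (oppr_pchar2 ch2). Qed.

Definition K (v w t r : F) := v + (w+1) * r^+q0 * r + r + t * (1+r) * (1 + r^+q0).

Lemma adj_ratio (a r v w : F) : a != 0 ->
  cay_adj q0 u (Phi q0 a (v * a^+(q0+1))) (Phi q0 (a * r) (w * (a * r)^+(q0+1))) =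
  (r != 1) && ((K v w u r == 0) || (K v w (u+1) r == 0)).
Proof.
move=> a0.
rewrite /cay_adj Phi_inv Phi_mul PhiConn.
have -> : (a + a * r != 0) = (r != 1).
  by rewrite -{1}[a]mulr1 -mulrDr mulf_eq0 (negbTE a0) /= -eq_char2 eq_sym.
congr (_ && (_ || _)); rewrite eq_char2.
  have -> : v * a ^+ (q0 + 1) + (w * (a * r) ^+ (q0 + 1) + (a * r) ^+ q0 * (a * r)) + a ^+ q0 * (a * r) +
    u * (a + a * r) ^+ (q0 + 1) = (a^+q0 * a) * K v w u r.
    rewrite /K !exprD !expr1 frob !exprMn; r2.
  by rewrite mulf_eq0 mulf_eq0 expf_eq0 (negbTE a0) andbF.
have -> : v * a ^+ (q0 + 1) + (w * (a * r) ^+ (q0 + 1) + (a * r) ^+ q0 * (a * r)) + a ^+ q0 * (a * r) +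
    (u+1) * (a + a * r) ^+ (q0 + 1) = (a^+q0 * a) * K v w (u+1) r.
  rewrite /K !exprD !expr1 frob !exprMn; r2.
by rewrite mulf_eq0 mulf_eq0 expf_eq0 (negbTE a0) andbF.
Qed.


Hypothesis fix1 : forall x : F, x != 0 -> x^+q0 = x -> x = 1.

Lemma eq_from (x y z : F) : z = 0 -> x + y = z -> x = y.
Proof. by move=> -> E; apply/eqP; rewrite eq_char2 E. Qed.

Lemma kern (c d s s0 : F) : c != 0 -> s != 0 -> s0 != 0 ->
  c * s^+q0 = d * s -> c * s0^+q0 = d * s0 -> s = s0.
Proof.
move=> c0 s_0 s00 E1 E2.
have d0 : d != 0.
  apply: contraNneq s_0 => d0; move: E1; rewrite d0 mul0r => /eqP.
  by rewrite mulf_eq0 (negbTE c0) expf_eq0 /= => /andP [].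
have : s / s0 = 1.
  apply: fix1; first by rewrite mulf_eq0 invr_eq0 negb_or s_0 s00.
  rewrite exprMn exprVn.
  have -> : s^+q0 = d * s / c by rewrite -E1; field.
  have -> : s0^+q0 = d * s0 / c by rewrite -E2; field.
  field; by rewrite d0 s00 c0.
move=> E; rewrite -[s](@divfK _ s0) // E mul1r //.
Qed.

Variable p : F.
Hypothesis p0 : p != 0.
Hypothesis eta0 : 1 + p != 0.
Hypothesis D0 : p + p^+q0 != 0.
Hypothesis hu : u = p^+q0 / (p + p^+q0).
Hypothesis noroot : forall x : F, x^+(q0.+1) + u * x^+q0 + (u+1) * x + 1 != 0.

Lemma divD_eq0 (x : F) : (x / (p + p^+q0) == 0) = (x == 0).
Proof. by rewrite mulf_eq0 invr_eq0 (negbTE D0) orbF. Qed.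

Lemma neq1 (r : F) : (r != 1) = (r + 1 != 0).
Proof. by rewrite eq_char2. Qed.

Lemma solB (r : F) : r != 1 -> p + p^+q0 + p^+q0 * r + p * r^+q0 = 0 -> r = 1 + p.
Proof.
move=> r1 E.
have : r + 1 = p.
  apply: (@kern p (p^+q0)) => //; first by rewrite -neq1.
    rewrite frob expr1n; apply: (eq_from E); r2.
  ring.
move=> <-; r2.
Qed.

Lemma solC (r : F) : r != 1 -> p + p^+q0 + p * r + p^+q0 * r^+q0 = 0 -> r = 1 + p^-1.
Proof.
move=> r1 E.
have : r + 1 = p^-1.
  apply: (@kern (p^+q0) p) => //; first by rewrite expf_eq0 (negbTE p0) andbF.
      by rewrite -neq1.
    by rewrite invr_eq0.
    rewrite frob expr1n; apply: (eq_from E); r2.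
  rewrite exprVn; field.
  by rewrite expf_eq0 (negbTE p0) andbF.
move=> <-; r2.
Qed.


Lemma pq0 : p^+q0 != 0. Proof. by rewrite expf_neq0. Qed.
Lemma etaq0 : (1+p)^+q0 != 0. Proof. by rewrite expf_neq0. Qed.
Lemma onep1 : 1 + p != 1.
Proof. by rewrite neq1; have -> : 1 + p + 1 = p by r2. Qed.

Definition KD (a b c r : F) := a + (b + (p + p^+q0)) * r^+q0 * r + (p + p^+q0) * r + c * (1+r)*(1+r^+q0).

Lemma KE v w t r : (K v w t r == 0) = (KD (v*(p + p^+q0)) (w*(p + p^+q0)) (t*(p + p^+q0)) r == 0).
Proof.
have -> : KD (v*(p + p^+q0)) (w*(p + p^+q0)) (t*(p + p^+q0)) r = K v w t r * (p + p^+q0).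
  by rewrite /KD /K; ring.
by rewrite mulf_eq0 (negbTE D0) orbF.
Qed.

Lemma uD : u * (p + p^+q0) = p^+q0.
Proof. by rewrite hu divfK. Qed.

Lemma u1D : (u + 1) * (p + p^+q0) = p.
Proof. rewrite mulrDl uD; r2. Qed.

Lemma case_ff (r : F) : r != 0 ->
  ((r != 1) && ((K u u u r == 0) || (K u u (u+1) r == 0))) =
  (r == 1 + p) || (r == (1+p)^-1).
Proof.
move=> r0.
rewrite !KE uD u1D.
have -> : KD (p^+q0) (p^+q0) (p^+q0) r = ((p + p^+q0) * r^+q0 * r + p*r + p^+q0 * r^+q0).
  rewrite /KD; r2.
have -> : KD (p^+q0) (p^+q0) p r = ((p + p^+q0) + p^+q0 * r + p * r^+q0).
  rewrite /KD; r2.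
have rq0 : r^+q0 != 0 by rewrite expf_neq0.
apply/idP/idP.
  case/andP => r1 /orP [/eqP EA | /eqP EB].
    apply/orP; right.
    have : r^-1 = 1 + p.
      apply: solB; first by rewrite invr_eq1.
      have -> : p + p ^+ q0 + p ^+ q0 * r^-1 + p * r^-1 ^+ q0 =
         ((p + p^+q0) * r^+q0 * r + p*r + p^+q0 * r^+q0) / (r^+q0 * r).
        rewrite exprVn; field; by rewrite rq0 r0.
      by rewrite EA mul0r.
    by move=> <-; rewrite invrK.
  by apply/orP; left; apply/eqP; apply: solB.
case/orP => /eqP ->.
  rewrite onep1 /=; apply/orP; right; rewrite frob expr1n; apply/eqP; r2.
rewrite invr_eq1 onep1 /=; apply/orP; left.
rewrite exprVn frob expr1n; apply/eqP; field: h2 c3 c4 c5 c6 c7 c8 cm2 cm4 cm6 cm8.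
have E : 1 + p^+q0 = (1+p)^+q0 by rewrite frob expr1n.
by rewrite E etaq0 eta0.
Qed.


Lemma eta0' : p + 1 != 0. Proof. by rewrite addrC eta0. Qed.
Lemma etaq0' : p^+q0 + 1 != 0.
Proof. by rewrite -[X in _ + X](expr1n _ q0) -frob expf_neq0 // eta0'. Qed.

Lemma p1 : p != 1.
Proof. apply: contraNneq eta0 => ->; apply/eqP; exact: h2. Qed.

Lemma ip0 : 1 + p^-1 != 0.
Proof.
have -> : 1 + p^-1 = (1 + p) / p by field.
by rewrite mulf_eq0 invr_eq0 negb_or eta0 p0.
Qed.

Lemma case_tt (r : F) : r != 0 ->
  ((r != 1) && ((K (u+1) (u+1) u r == 0) || (K (u+1) (u+1) (u+1) r == 0))) =
  (r == (1 + p^-1)^-1) || (r == 1 + p^-1).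
Proof.
move=> r0.
rewrite !KE uD u1D.
have -> : KD p p (p^+q0) r = ((p + p^+q0) + p * r + p^+q0 * r^+q0).
  rewrite /KD; r2.
have -> : KD p p p r = ((p + p^+q0) * r^+q0 * r + p^+q0 * r + p * r^+q0).
  rewrite /KD; r2.
have rq0 : r^+q0 != 0 by rewrite expf_neq0.
have ipq : 1 + p^-1^+q0 != 0.
  by rewrite -[X in X + _](expr1n _ q0) -frob expf_neq0 // ip0.
apply/idP/idP.
  case/andP => r1 /orP [/eqP EC | /eqP ED].
    by apply/orP; right; apply/eqP; apply: solC.
  apply/orP; left.
  have : r^-1 = 1 + p^-1.
    apply: solC; first by rewrite invr_eq1.
    have -> : p + p ^+ q0 + p * r^-1 + p^+q0 * r^-1 ^+ q0 =
       ((p + p^+q0) * r^+q0 * r + p^+q0 * r + p * r^+q0) / (r^+q0 * r).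
      rewrite exprVn; field; by rewrite rq0 r0.
    by rewrite ED mul0r.
  by move=> <-; rewrite invrK.
case/orP => /eqP ->.
  rewrite invr_eq1 neq1.
  have -> : 1 + p^-1 + 1 = p^-1 by r2.
  rewrite invr_eq0 p0 /=; apply/orP; right.
  rewrite exprVn frob expr1n exprVn; apply/eqP; field: h2 c3 c4 c5 c6 c7 c8 cm2 cm4 cm6 cm8.
by rewrite pq0 p0 eta0' etaq0'.
rewrite neq1.
have -> : 1 + p^-1 + 1 = p^-1 by r2.
rewrite invr_eq0 p0 /=; apply/orP; left.
rewrite frob expr1n exprVn; apply/eqP; field: h2 c3 c4 c5 c6 c7 c8 cm2 cm4 cm6 cm8.
by rewrite p0 pq0.
Qed.

Definition Pval (x : F) := x^+(q0.+1) + u * x^+q0 + (u+1) * x + 1.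

Lemma case_ft (R : F) : R != 0 ->
  ((R / p != 1) && ((K u (u+1) u (R / p) == 0) || (K u (u+1) (u+1) (R / p) == 0))) = (R == 1).
Proof.
move=> R0.
have r0 : R / p != 0 by rewrite mulf_eq0 invr_eq0 negb_or R0 p0.
have -> : K u (u+1) (u+1) (R / p) = (R/p)^+q0 * (R/p) * Pval ((R/p)^-1).
  rewrite /K /Pval exprS exprVn; field: h2 c3 c4 c5 c6 c7 c8 cm2 cm4 cm6 cm8.
  by rewrite p0 R0 expf_neq0.
have := noroot (R/p)^-1; rewrite -/(Pval _) => NR.
rewrite mulf_eq0 (negbTE NR) mulf_eq0 expf_eq0 (negbTE r0) andbF orbF /= orbF.
rewrite KE uD u1D.
have -> : KD (p^+q0) p (p^+q0) (R/p) = p * (R/p) + p^+q0 * (R/p)^+q0.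
  rewrite /KD; r2.
apply/idP/idP.
  case/andP => _ /eqP E.
  have : R / p = p^-1.
    apply: (@kern (p^+q0) p) => //; first exact: pq0.
      by rewrite invr_eq0.
      by apply: (eq_from E); r2.
    rewrite exprVn; field; by rewrite pq0 p0.
  by move/(congr1 (fun x => x * p)); rewrite divfK // mulVf // => ->.
move/eqP => ->; rewrite mul1r invr_eq1 p1 /=.
rewrite exprVn; apply/eqP; field: h2 c3 c4 c5 c6 c7 c8 cm2 cm4 cm6 cm8.
by rewrite pq0 p0.
Qed.

Lemma case_tf (R : F) : R != 0 ->
  ((R * p != 1) && ((K (u+1) u u (R * p) == 0) || (K (u+1) u (u+1) (R * p) == 0))) = (R == 1).
Proof.
move=> R0.
have r0 : R * p != 0 by rewrite mulf_eq0 negb_or R0 p0.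
have -> : K (u+1) u u (R * p) = Pval (R * p).
  rewrite /K /Pval exprS; r2.
rewrite (negbTE (noroot _)) /=.
rewrite KE uD u1D.
have -> : KD p (p^+q0) p (R * p) = p^+q0 * (R * p) + p * (R * p)^+q0.
  rewrite /KD; r2.
apply/idP/idP.
  case/andP => _ /eqP E.
  have : R * p = p.
    apply: (@kern p (p^+q0)) => //; last by rewrite mulrC.
    by apply: (eq_from E); r2.
  by move/(congr1 (fun x => x / p)); rewrite mulfK // divff // => ->.
move/eqP => ->; rewrite mul1r p1 /=.
apply/eqP; r2.
Qed.


Variable eta : F.
Hypothesis hp : p = 1 + eta.
Variable n : nat.
Hypothesis hprim : n.-primitive_root eta.
Hypothesis n1 : (1 < n)%N.
Hypothesis hn : forall a : F, a != 0 -> a^+n = 1.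
Variable k : int.
Hypothesis hk : 1 + eta = eta ^ (k + 1).

Lemma etap : 1 + p = eta. Proof. rewrite hp; r2. Qed.
Lemma eta_ne0 : eta != 0. Proof. by rewrite -etap eta0. Qed.

Lemma etak : eta ^ k = (1 + p^-1)^-1.
Proof.
have : p = eta ^ k * eta by rewrite hp hk expfzDr ?eta_ne0 // expr1z.
move=> E.
have -> : eta ^ k = p / eta by rewrite E mulfK // eta_ne0.
rewrite -etap; field; by rewrite p0 eta0'.
Qed.

Lemma n0 : (0 < n)%N. Proof. exact: ltnW. Qed.

Lemma expz_mod z : eta ^ z = eta ^+ `|(z %% n)%Z|%N.
Proof.
have nz : (n%:Z != 0) by rewrite eqz_nat -lt0n n0.
rewrite {1}(divz_eq z n) expfzDr ?eta_ne0 // -exprz_exp exprzAC -exprnP.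
by rewrite (prim_expr_order hprim) exp1rz mul1r exprnP gez0_abs // modz_ge0.
Qed.

Lemma etainj (i j : 'I_n) : (eta ^+ i == eta ^+ j) = (i == j).
Proof. by rewrite (eq_prim_root_expr hprim) !modn_small. Qed.

Lemma modexp z1 z2 : (z1 == z2 %[mod n])%Z = (eta ^ z1 == eta ^ z2).
Proof.
have nz : (n%:Z != 0) by rewrite eqz_nat -lt0n n0.
rewrite !expz_mod (eq_prim_root_expr hprim) !modn_small.
- by rewrite -[in LHS](gez0_abs (modz_ge0 z1 nz)) -[in LHS](gez0_abs (modz_ge0 z2 nz)).
- by rewrite -ltz_nat gez0_abs ?modz_ge0 // ltz_pmod // ltz_nat n0.
- by rewrite -ltz_nat gez0_abs ?modz_ge0 // ltz_pmod // ltz_nat n0.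
Qed.


Definition Aof (x : bool * 'I_n) : F := if x.1 then eta ^+ x.2 / p else eta ^+ x.2.
Definition Vof (b : bool) : F := if b then u + 1 else u.
Definition gv (x : bool * 'I_n) := Phi q0 (Aof x) (Vof x.1 * Aof x ^+ (q0 + 1)).

Lemma etai0 (i : nat) : eta ^+ i != 0. Proof. by rewrite expf_neq0 // eta_ne0. Qed.

Lemma Aof_neq0 x : Aof x != 0.
Proof. by case: x => [[] i]; rewrite /Aof /= ?mulf_neq0 ?invr_eq0 ?etai0. Qed.

Lemma gvP x : gv x \in Conn q0 u.
Proof. by rewrite /gv PhiConn Aof_neq0 /=; case: x.1; rewrite eqxx ?orbT. Qed.

Lemma divE (a b c : F) : a != 0 -> (b / a == c) = (b == a * c).
Proof. by move=> a0; apply/eqP/eqP => [<-|->]; field. Qed.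

Lemma divEV (a b c : F) : a != 0 -> b != 0 -> c != 0 -> (b / a == c^-1) = (a == b * c).
Proof.
move=> a0 b0 c0; apply/eqP/eqP => [E|->].
  have E' : b = a / c by rewrite -E; field.
  by rewrite E'; field.
by field; rewrite b0 c0.
Qed.

Lemma adj x y : cay_adj q0 u (gv x) (gv y) = gpg_adj n k x y.
Proof.
case: x => [s i]; case: y => [t j].
have R0 : eta ^+ j / eta ^+ i != 0 by rewrite mulf_neq0 ?invr_eq0 ?etai0.
rewrite /gv /Aof /Vof /gpg_adj /gpg_edge /=.
case: s; case: t => /=.
- rewrite (_ : eta ^+ j / p = eta ^+ i / p * (eta ^+ j / eta ^+ i)); last first.
    by field; rewrite p0 etai0.
  rewrite adj_ratio ?mulf_neq0 ?invr_eq0 ?etai0 ?p0 // case_tt //.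
  rewrite !modexp !expfzDr ?eta_ne0 // etak -!exprnP.
  rewrite divE ?etai0 //; congr orb.
  by rewrite -{1}[1 + p^-1]invrK divEV ?etai0 ?invr_eq0 ?ip0.
- rewrite (_ : eta ^+ j = eta ^+ i / p * (eta ^+ j / eta ^+ i * p)); last first.
    by field; rewrite p0 etai0.
  rewrite adj_ratio ?mulf_neq0 ?invr_eq0 ?etai0 ?p0 // case_tf //.
  by rewrite divE ?etai0 // mulr1 etainj.
- rewrite (_ : eta ^+ j / p = eta ^+ i * (eta ^+ j / eta ^+ i / p)); last first.
    by field; rewrite p0 etai0.
  rewrite adj_ratio ?mulf_neq0 ?invr_eq0 ?etai0 ?p0 // case_ft //.
  by rewrite divE ?etai0 // mulr1 etainj eq_sym orbF.
- rewrite (_ : eta ^+ j = eta ^+ i * (eta ^+ j / eta ^+ i)); last first.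
    by field; rewrite etai0.
  rewrite adj_ratio ?etai0 // case_ff // etap.
  rewrite !modexp !expfzDr ?eta_ne0 // expr1z -!exprnP.
  rewrite divE ?etai0 //; congr orb.
  by rewrite divEV ?etai0 ?eta_ne0.
Qed.


Definition fmap (x : bool * 'I_n) : {M : 'M[F]_3 | M \in Conn q0 u} := exist _ (gv x) (gvP x).

Lemma u1u : (u + 1 == u) = false.
Proof. by rewrite -subr_eq0 addrAC subrr add0r oner_eq0. Qed.

Lemma fmap_inj : injective fmap.
Proof.
move=> [s i] [t j] /(congr1 val) /= /Phi_inj [EA EV].
have st : s = t.
  move: EV; rewrite EA; clear EA => /(mulIf (expf_neq0 _ (Aof_neq0 (t, j)))).
  by case: s; case: t => //= /eqP; rewrite ?u1u // eq_sym u1u.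
move: EA; rewrite -st => EA; congr pair; apply/eqP; rewrite -etainj; apply/eqP.
move: EA; rewrite /Aof /=; clear EV; case: s {st} => //.
exact: (mulIf (invr_neq0 p0)).
Qed.

Lemma card_le : (#|{: {M : 'M[F]_3 | M \in Conn q0 u}}| <= #|{: bool * 'I_n}|)%N.
Proof.
rewrite card_sig -cardsT.
apply: (@leq_trans #|[set gv x | x in [set: bool * 'I_n]]|); last exact: leq_imset_card.
apply: subset_leq_card; apply/subsetP => M.
move=> HM; have {HM} : M \in Conn q0 u by exact: HM.
rewrite /Conn /Omega inE => /orP [] /imsetP [a]; rewrite inE => a0 ->.
  have [i Ei] := prim_rootP hprim (hn a0).
  by apply/imsetP; exists (false, i); rewrite ?inE // /gv /Aof /Vof /= -Ei.
have ap0 : a * p != 0 by rewrite mulf_neq0.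
have [i Ei] := prim_rootP hprim (hn ap0).
by apply/imsetP; exists (true, i); rewrite ?inE // /gv /Aof /Vof /= -Ei mulfK.
Qed.

Lemma main_iso : graph_iso (gpg_adj n k) (induced (cay_adj q0 u) (Conn q0 u)).
Proof.
exists fmap; split; first exact: inj_card_bij fmap_inj card_le.
by move=> x y; rewrite /induced /=; exact: adj.
Qed.

End S.

Unset Implicit Arguments.
From mathcomp Require Import zify.
Theorem proposition6p3 (F : finFieldType) (f q0 : nat) (u eta : F) (k : int) :
  #|F| = (2 ^ f)%N ->
  (4 <= f)%N ->
  (exists e : nat, q0 = (2 ^ e)%N) ->
  (q0 < #|F|)%N ->
  coprime (#|F|.-1) (q0 ^ 2 - 1) ->
  u \in Uset F q0 ->
  (#|F|.-1).-primitive_root eta ->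
  u = (1 + eta ^+ q0) / (eta + eta ^+ q0) ->
  1 + eta = eta ^ (k + 1) ->
  graph_iso (gpg_adj (#|F|.-1) k) (induced (cay_adj q0 u) (Conn q0 u)).
Proof.
move=> hF hf [e he] hq0 hcop hU hprim hu hk.
have ch2F : 2 \in [pchar F] by apply: (card_finPcharP hF).
have h2 : (2:F) = 0 by move: ch2F; rewrite inE => /andP [_ /eqP].
have frob : forall x y : F, (x + y)^+q0 = x^+q0 + y^+q0.
  by move=> x y; rewrite he; apply: exprDn_pchar; rewrite pnatX pnatE // ch2F.
have q0pos : (0 < q0)%N by rewrite he expn_gt0.
have n1 : (1 < #|F|.-1)%N.
  have : (2 ^ 4 <= 2 ^ f)%N by rewrite leq_exp2l.
  rewrite hF; lia.
have n0 : (0 < #|F|.-1)%N by lia.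
have F0 : (0 < #|F|)%N by lia.
have hn : forall a : F, a != 0 -> a^+(#|F|.-1) = 1.
  move=> a a0; apply: (mulIf a0); rewrite mul1r -exprSr prednK //.
  exact: expf_card.
have cop1 : coprime (#|F|.-1) (q0 - 1).
  apply: (coprime_dvdr _ hcop).
  have -> : (q0 ^ 2 - 1 = q0 ^ 2 - 1 ^ 2)%N by rewrite exp1n.
  by rewrite subn_sqr dvdn_mulr.
have fix1 : forall x : F, x != 0 -> x^+q0 = x -> x = 1.
  move=> x x0 E.
  have E1 : x^+(q0 - 1) = 1.
    apply: (mulIf x0); rewrite mul1r -exprSr subn1 prednK //.
  have [a _ dv] := Bezoutl (q0 - 1) n0.
  move: dv; rewrite (eqP cop1) => /dvdnP [c Ec].
  have : x^+(1 + a * (q0 - 1)) = x^+(c * #|F|.-1).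
    by rewrite Ec.
  by rewrite exprD expr1 mulnC exprM E1 expr1n mulr1 [(c * _)%N]mulnC exprM (hn x x0) expr1n.
have noroot : forall x : F, x^+(q0.+1) + u * x^+q0 + (u+1) * x + 1 != 0.
  move=> x; move: hU; rewrite inE => /andP [_ H]; apply: contra H => Hx.
  apply/existsP; exists x; rewrite rootE !hornerE.
  done.
have etan1 : eta != 1.
  apply/negP => /eqP E; move: (prim_order_dvd hprim 1); rewrite E expr1n eqxx.
  move/esym; rewrite dvdn1; lia.
have etan0 : eta != 0.
  apply/negP => /eqP E; move: (prim_expr_order hprim); rewrite E expr0n.
  have -> : (#|F|.-1 == 0%N) = false by lia.
  by move/eqP; rewrite eq_sym oner_eq0.
have p0 : 1 + eta != 0.
  apply: contraNneq etan1 => E.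
  by rewrite -[eta]add0r -(addrr_pchar2 ch2F 1) -addrA E addr0.
have eta0 : 1 + (1 + eta) != 0 by rewrite addrA (addrr_pchar2 ch2F) add0r.
have D0 : (1 + eta) + (1 + eta)^+q0 != 0.
  apply/negP => /eqP E.
  have E2 : (1 + eta)^+q0 = 1 + eta.
    by move/eqP: E; rewrite addr_eq0 (oppr_pchar2 ch2F) => /eqP E; exact: esym E.
  have := fix1 _ p0 E2; move/(congr1 (fun z => z + 1)).
  rewrite addrAC (addrr_pchar2 ch2F) add0r => /eqP.
  by rewrite (negbTE etan0).
have hu' : u = (1 + eta)^+q0 / ((1 + eta) + (1 + eta)^+q0).
  rewrite hu frob expr1n; congr (_ / _).
  by rewrite addrACA (addrr_pchar2 ch2F) add0r.
exact: (main_iso h2 frob q0pos fix1 p0 eta0 D0 hu' noroot (erefl _) hprim n1 hn hk).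
Qed.
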